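(* Let $n\ge1$ and let $p$ be a strongly 312-avoiding permutation of $\{1,\dots,n\}$ with $p_n=1$. Then there is an integer $k$ with $1\le k\le n$ such that $p=(k+1)(k+2)\cdots n\;k(k-1)\cdots 2\,1$.
   Context: Permutations are written in one-line notation $p=p_1\cdots p_n$ with $p_i=p(i)$. $p$ contains a pattern $q=q_1\cdots q_m$ if there are indices $i_1<\cdots<i_m$ with $p_{i_r}<p_{i_s}$ iff $q_r<q_s$; otherwise $p$ avoids $q$. $p^2(i)=p(p(i))$. A permutation $p$ is strongly $q$-avoiding if both $p$ and $p^2$ avoid $q$. *)

(* Defs.v *)
(* Permutations of {1..n} are modelled as {perm 'I_n},
   i.e. positions and values are shifted down by one (0-indexed). *)
From mathcomp Require Import all_boot all_order all_fingroup.
Set Implicit Arguments. Unset Strict Implicit. Unset Printing Implicit Defensive.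

Definition contains_pattern (n : nat) (p : {perm 'I_n}) (q : seq nat) : Prop :=
  exists idx : 'I_(size q) -> 'I_n,
    (forall r s : 'I_(size q), (r < s)%N -> (idx r < idx s)%N) /\
    (forall r s : 'I_(size q),
        (p (idx r) < p (idx s))%N = (nth 0%N q r < nth 0%N q s)%N).

Definition avoids (n : nat) (p : {perm 'I_n}) (q : seq nat) : Prop :=
  ~ contains_pattern p q.

Definition strongly_avoiding (n : nat) (p : {perm 'I_n}) (q : seq nat) : Prop :=
  avoids p q /\ avoids (p * p)%g q.

(* Main.v *)
Require Import Defs.
From mathcomp Require Import all_boot all_order all_fingroup.
From mathcomp Require Import zify.
Open Scope nat_scope.

Lemma no312 N (q : {perm 'I_N}) : avoids q [:: 3; 1; 2]%N ->
  forall i j l : 'I_N, (i < j)%N -> (j < l)%N -> (q j < q l)%N -> (q l < q i)%N -> False.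
Proof.
move=> H i j l ij jl h1 h2; apply: H.
exists (fun r : 'I_3 => nth i [:: i; j; l] r); split.
- move=> [[|[|[|r]]] hr] [[|[|[|s]]] hs] //= _; lia.
- move=> [[|[|[|r]]] hr] [[|[|[|s]]] hs] //=; lia.
Qed.

Lemma incr_onto (f : nat -> nat) (k c : nat) :
 (forall i j, (i < j)%N -> (j <= k)%N -> (f i < f j)%N) -> f 0%N = c ->
 (forall v, (c <= v)%N -> (v <= f k)%N -> exists2 i, (i <= k)%N & f i = v) ->
 forall i, (i <= k)%N -> f i = (c + i)%N.
Proof.
move=> inc f0 surj; elim=> [|i IH] hi; first by rewrite f0 addn0.
have IHi := IH (ltnW hi).
have h1 : (f i < f i.+1)%N := inc i i.+1 (ltnSn i) hi.
have fmon : forall j, (j <= k)%N -> (i.+1 <= j)%N -> (f i.+1 <= f j)%N.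
  move=> j jk ij; rewrite leq_eqVlt in ij; case/orP: ij => [/eqP -> //| ij].
  exact: ltnW (inc _ _ ij jk).
have fle : forall y, (y <= i)%N -> (f y <= f i)%N.
  move=> y yi; rewrite leq_eqVlt in yi; case/orP: yi => [/eqP -> //| yi].
  apply: ltnW; apply: inc yi _; lia.
case: (ltngtP (f i.+1) (c + i.+1)) => // h; first lia.
have [y yk fy] := surj (c + i.+1)%N ltac:(lia) (leq_trans (ltnW h) (fmon k (leqnn k) hi)).
case: (leqP y i) => hy.
- have := fle y hy; lia.
- have := fmon y yk hy; lia.
Qed.
Lemma main_nat (n : nat) (P : nat -> nat) : 0 < n ->
  (forall i, i <= n -> P i <= n) ->
  (forall i j, i <= n -> j <= n -> P i = P j -> i = j) ->
  (forall v, v <= n -> exists2 i, i <= n & P i = v) ->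
  P n = 0 ->
  (forall i j l, i < j -> j < l -> l <= n -> P j < P l -> P l < P i -> False) ->
  (forall i j l, i < j -> j < l -> l <= n -> P (P j) < P (P l) -> P (P l) < P (P i) -> False) ->
  exists k, [/\ 1 <= k, k <= n.+1 &
    forall i, i <= n -> P i = if i < n.+1 - k then k + i else n - i].
Proof.
move=> n0 Pr Pi Ps Pn H1 H2.
have Pne : forall i j, i <= n -> j <= n -> i <> j -> P i <> P j.
  by move=> i j hi hj ij E; apply: ij; apply: Pi.
have Qr : forall i, i <= n -> P (P i) <= n by move=> i hi; apply/Pr/Pr.
have Qne : forall i j, i <= n -> j <= n -> i <> j -> P (P i) <> P (P j).
  move=> i j hi hj ij; apply: (Pne); try exact: Pr; exact: (Pne).
have [m mn Pm] := Ps n (leqnn n).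
have a0 : 0 < P 0.
  have := Pne 0 n (leq0n _) (leqnn _) ltac:(lia); lia.
have mlt : m < n.
  case: (ltngtP m n) => // h; first lia; subst m; lia.
have S1 : forall i j, m <= i -> i < j -> j <= n -> P j < P i.
  move=> i j hi ij jn.
  have := Pne j m jn (ltnW mlt) ltac:(lia).
  have := Pne j i jn ltac:(lia) ltac:(lia).
  have := Pr j jn.
  case: (ltngtP (P j) (P i)) => // h X1 X2 X3.
  have [E|hm] : i = m \/ m < i by lia.
  - subst i; have := Pr j jn; lia.
  - exfalso; apply: (H1 m i j) => //; lia.
have S2 : forall i l, i < m -> m < l -> l <= n -> P (P i) < P (P l).
  move=> i l im ml ln.
  have := Qne l i ln ltac:(lia) ltac:(lia).
  have := Qne l m ln ltac:(lia) ltac:(lia).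
  rewrite Pm Pn.
  case: (ltngtP (P (P l)) (P (P i))) => // h X1 X2.
  exfalso; apply: (H2 i m l) => //; rewrite Pm Pn; lia.
have S3 : forall i j, 0 < i -> i < j -> j <= n -> P i < P 0 -> P j < P 0 -> P j < P i.
  move=> i j i0 ij jn hi hj.
  have := Pne j i jn ltac:(lia) ltac:(lia).
  case: (ltngtP (P j) (P i)) => // h X1.
  exfalso; apply: (H1 0 i j) => //.
have [x xn Px] := Ps m (ltnW mlt).
have S4 : forall i j, x <= i -> i < j -> j <= n -> P (P j) < P (P i).
  move=> i j hi ij jn.
  have := Qne j x jn xn ltac:(lia).
  have := Qne j i jn ltac:(lia) ltac:(lia).
  have := Qr j jn.
  rewrite Px.
  case: (ltngtP (P (P j)) (P (P i))) => // h X1 X2 X3.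
  have [E|hm] : i = x \/ x < i by lia.
  - subst i; rewrite Px Pm in h; have := Qr j jn; lia.
  - exfalso; apply: (H2 x i j) => //; rewrite Px Pm; have := Qr j jn; lia.
set a := P 0 in a0 S3 *.
have am : m < a.
  have : size (map (fun i => P (P i)) (iota 0 m.+1)) <= size (iota 0 a).
    apply: uniq_leq_size.
    - rewrite map_inj_in_uniq ?iota_uniq // => i j; rewrite !mem_iota => hi hj.
      move=> E; apply: (Pi); try lia; apply: (Pi) E; apply: (Pr); lia.
    - move=> v /mapP [i]; rewrite !mem_iota => hi ->; apply/andP; split => //.
      case: (ltngtP i m) => h; try lia.
      + have := S2 i n h mlt (leqnn n); rewrite Pn; lia.
      + subst i; rewrite Pm Pn; lia.
  by rewrite size_map !size_iota.
have xm : m < x.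
  case: (ltngtP m x) => // h.
  - have := S4 m n ltac:(lia) mlt (leqnn n); rewrite Pm Pn; lia.
  - subst x; lia.
have posC : forall v y, v <= m -> y <= n -> P y = v -> x <= y.
  move=> v y vm yn Py.
  case: (leqP x y) => // yx.
  case: (posnP y) => y0.
  - subst y; rewrite -/a in Py; lia.
  - have := S3 y x y0 yx xn ltac:(lia) ltac:(lia); lia.
have T2 : forall i j, i < j -> j <= m -> P i < P j.
  move=> i j ij jm.
  have [yi yin Pyi] := Ps i ltac:(lia).
  have [yj yjn Pyj] := Ps j ltac:(lia).
  have hxi := posC i yi ltac:(lia) yin Pyi.
  have hxj := posC j yj ltac:(lia) yjn Pyj.
  case: (ltngtP yi yj) => h.
  - have := S1 yi yj ltac:(lia) h yjn; lia.
  - have := S4 yj yi hxj h yin; rewrite Pyi Pyj; lia.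
  - subst yj; lia.
have T1 : forall i, i <= m -> a <= P i.
  move=> i im; case: (posnP i) => [->|i0] //; have := T2 0 i i0 im; rewrite -/a; lia.
have T3 : forall j, m < j -> j <= n -> P j < a.
  move=> j mj jn.
  have := Pne j m jn (ltnW mlt) ltac:(lia).
  have := Pne j 0 jn (leq0n _) ltac:(lia).
  have := Pr j jn.
  rewrite -/a => hr h0 hm.
  case: (posnP m) => m0.
  - rewrite m0 -/a in Pm hm; lia.
  - case: (ltnP (P j) a) => // h; have {}h : a < P j by lia.
    have := S1 a (P j) ltac:(lia) h hr.
    have := S2 0 j m0 mj jn; rewrite -/a; lia.
have Pinc : forall i, i <= m -> P i = a + i.
  apply: incr_onto => //.
  move=> v av vm.
  have vn : v <= n by have := Pr m (ltnW mlt); lia.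
  have [y yn Py] := Ps v vn.
  exists y => //; case: (leqP y m) => // ym; have := T3 y ym yn; lia.
have anm : a + m = n by rewrite -Pinc.
have Pdec : forall t, t <= n - m.+1 -> P (n - t) = t.
  move=> t ht; rewrite -[t in RHS]add0n; apply: (incr_onto (fun t => P (n - t)) (n - m.+1) 0 _ _ _ t ht).
  - move=> u u2 uu2 u2k; apply: S1; lia.
  - by rewrite subn0.
  - move=> v _ hv.
    have vn : v < a by have := T3 (n - (n - m.+1)) ltac:(lia) ltac:(lia); lia.
    have [y yn Py] := Ps v ltac:(lia).
    have ym : m < y by case: (leqP y m) => // ym; have := T1 y ym; lia.
    exists (n - y); first lia.
    by rewrite subKn.
exists a; split; try lia.
move=> i hi; case: ifP => h.
- apply: Pinc; lia.
- have := Pdec (n - i) ltac:(lia); rewrite subKn //.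
Qed.

Theorem lemma3p6 (n : nat) (p : {perm 'I_n.+1}) :
  strongly_avoiding p [:: 3; 1; 2]%N ->
  nat_of_ord (p ord_max) = 0%N ->
  exists k : nat, [/\ (1 <= k)%N, (k <= n.+1)%N &
    forall i : 'I_n.+1,
      nat_of_ord (p i) = (if (i < n.+1 - k)%N then k + i else n - i)%N].
Proof.
move=> [A1 A2] hmax.
case: (posnP n) => n0.
  subst n; exists 1; split => // i.
  by rewrite (ord1 i) /=; case: (p ord0) => [[|]].
pose P := fun i : nat => nat_of_ord (p (inord i)).
have PE : forall i : 'I_n.+1, nat_of_ord (p i) = P i by move=> i; rewrite /P inord_val.
have PE2 : forall i, i <= n -> P (P i) = nat_of_ord ((p * p)%g (inord i)).
  by move=> i hi; rewrite permM /P inord_val.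
have Pr : forall i, i <= n -> P i <= n by move=> i _; rewrite -ltnS; exact: ltn_ord.
have [k [k1 k2 Hk]] : exists k, [/\ 1 <= k, k <= n.+1 &
    forall i, i <= n -> P i = if i < n.+1 - k then k + i else n - i].
  apply: main_nat => //.
  - move=> i j hi hj E; have /perm_inj/(congr1 val) : p (inord i) = p (inord j) by apply: val_inj.
    by rewrite /= !inordK.
  - move=> v hv; exists (nat_of_ord ((p^-1)%g (inord v))); first by rewrite -ltnS.
    by rewrite /P inord_val permKV inordK.
  - by rewrite /P -hmax; congr (nat_of_ord (p _)); apply: val_inj; rewrite /= inordK.
  - move=> i j l ij jl ln h1 h2.
    apply: (@no312 _ _ A1 (inord i) (inord j) (inord l)); rewrite ?inordK //; lia.
  - move=> i j l ij jl ln h1 h2.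
    apply: (@no312 _ _ A2 (inord i) (inord j) (inord l)); rewrite -?PE2 ?inordK //; lia.
exists k; split => // i; rewrite PE Hk //; rewrite -ltnS; exact: ltn_ord.
Qed.
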